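(* Let $G$ be a finite group with $|G'|=2$. (1) $\mathcal B(G)$ is seminormal. (2) $\mathcal C(\mathcal B(G),\mathcal F(G))$ is a Clifford semigroup. In particular, if $S\in\mathcal F(G)$ with $\pi(S)=\{g\}$ and $n=\mathrm{ord}(g)$, then $\{[S],[S^{[2]}],\ldots,[S^{[n]}]\}$ is a cyclic subgroup of $\mathcal C(\mathcal B(G),\mathcal F(G))$ of order $n$ generated by $[S]$. (3) $|\mathcal C(\mathcal B(G),\mathcal F(G))|\le|\mathsf Z(G)|+\prod_{g\in G\setminus\mathsf Z(G)}\mathrm{ord}(g)$.
   Context: Let $G$ be a finite group written multiplicatively with identity $1_G$; $G'$ is its commutator subgroup and $\mathsf Z(G)$ its center. $\mathcal F(G)$ is the free abelian monoid with basis $G$ (sequences $S=g_1\boldsymbol{\cdot}\ldots\boldsymbol{\cdot}g_\ell$, operation $\boldsymbol{\cdot}$ = concatenation, $S^{[k]}$ the $k$-fold product of $S$ with itself). $\pi(S)=\{g_{\tau(1)}\cdots g_{\tau(\ell)}:\tau\text{ a permutation of }[1,\ell]\}$, $\pi$ of the empty sequence is $\{1_G\}$, and $\mathcal B(G)=\{S\in\mathcal F(G):1_G\in\pi(S)\}$. For $S,S'\in\mathcal F(G)$, $S\sim S'$ means: for all $T\in\mathcal F(G)$, $S\boldsymbol{\cdot}T\in\mathcal B(G)\iff S'\boldsymbol{\cdot}T\in\mathcal B(G)$; this is a congruence, $[S]$ is the class of $S$, and $\mathcal C(\mathcal B(G),\mathcal F(G))$ is the set of classes, an additively written commutative semigroup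 with $[S]+[T]=[S\boldsymbol{\cdot}T]$. A monoid $H$ with quotient group $\mathsf q(H)$ is seminormal if $x\in\mathsf q(H)$ and $x^2,x^3\in H$ imply $x\in H$. A commutative semigroup is a Clifford semigroup if every element lies in some subgroup of it. *)

(* Defs.v *)
From HB Require Import structures.
From mathcomp Require Import all_boot all_order all_algebra all_fingroup all_solvable.
Set Implicit Arguments. Unset Strict Implicit. Unset Printing Implicit Defensive.
Import GRing.Theory.

(* The group G is the whole finite group type gT.
   The free abelian monoid F(G) with basis G is modelled as the
   multiplicity functions {ffun gT -> nat}; concatenation is pointwise
   addition. *)
Definition fseq (gT : finGroupType) := {ffun gT -> nat}.

Definition fcat (gT : finGroupType) (S T : fseq gT) : fseq gT :=
  [ffun x => (S x + T x)%N].

Definition fpow (gT : finGroupType) (S : fseq gT) (k : nat) : fseq gT :=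
  [ffun x => (k * S x)%N].

(* g \in pi(S): g is the product of the terms of S in some order
   (an ordering of S is a list t with the multiplicities of S). *)
Definition in_pi (gT : finGroupType) (S : fseq gT) (g : gT) : Prop :=
  exists t : seq gT, (forall x, count_mem x t = S x) /\
                     (\prod_(x <- t) x)%g = g.

Definition inB (gT : finGroupType) (S : fseq gT) : Prop := in_pi S 1%g.

Definition simB (gT : finGroupType) (S S' : fseq gT) : Prop :=
  forall T : fseq gT, inB (fcat S T) <-> inB (fcat S' T).

(* The free abelian group Z^(G) = q(F(G)), containing q(H) for a submonoid H. *)
Definition embZ (gT : finGroupType) (S : fseq gT) : {ffun gT -> int} :=
  [ffun x => ((S x)%:Z)%R].

Definition inZ (gT : finGroupType) (H : fseq gT -> Prop) (x : {ffun gT -> int}) : Prop :=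
  exists a, H a /\ x = embZ a.

Definition in_quot (gT : finGroupType) (H : fseq gT -> Prop) (x : {ffun gT -> int}) : Prop :=
  exists a b, H a /\ H b /\ x = [ffun g => ((a g)%:Z - (b g)%:Z)%R].

Definition zpow (gT : finGroupType) (x : {ffun gT -> int}) (k : nat) : {ffun gT -> int} :=
  [ffun g => (x g *+ k)%R].

Definition seminormal (gT : finGroupType) (H : fseq gT -> Prop) : Prop :=
  forall x, in_quot H x -> inZ H (zpow x 2) -> inZ H (zpow x 3) -> inZ H x.

(* A subgroup of the class semigroup C(B(G),F(G)), given as the union K of
   the classes it contains (so K is ~-saturated). *)
Definition class_subgroup (gT : finGroupType) (K : fseq gT -> Prop) : Prop :=
  [/\ (forall S S', simB S S' -> K S -> K S'),
      (forall S T, K S -> K T -> K (fcat S T)) &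
      exists2 E, K E &
        (forall S, K S -> simB (fcat E S) S) /\
        (forall S, K S -> exists2 T, K T & simB (fcat S T) E)].

Definition clifford_class_semigroup (gT : finGroupType) : Prop :=
  forall S : fseq gT, exists2 K, class_subgroup K & K S.

(* Main.v *)
Require Import Defs.
From mathcomp Require Import all_boot all_order all_algebra all_fingroup all_solvable.
From Stdlib Require Import Classical ClassicalEpsilon.
From mathcomp Require Import zify.
Set Implicit Arguments. Unset Strict Implicit. Unset Printing Implicit Defensive.

Lemma ar2 a : 3 <= a -> 2 * (a + 1) <= 2 ^ a.
Proof. elim: a => // a IH h. rewrite expnS. have [->//|h3] := eqVneq a 2. have : 3 <= a by lia. move/IH. lia. Qed.
Lemma ar1 a b : 3 <= a -> 1 <= b -> (a + 1) * (b + 1) <= 2 ^ (a * b).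
Proof.
move=> ha; elim: b => // b IH hb.
have [->|hb1] := eqVneq b 0; first by rewrite muln1 mulnC; apply: ar2.
have := IH (ltac:(lia)) => h.
have : 2 <= 2 ^ a by rewrite (leq_exp2l 1 a) //; lia.
rewrite mulnS expnD; nia.
Qed.

Lemma card_pow0 (T : finType) (A : {set T}) : #|powerset A :\ set0| = (2 ^ #|A|).-1.
Proof. by rewrite -card_powerset (cardsD1 set0 (powerset A)) powersetE sub0set. Qed.

Section Main.
Variable gT : finGroupType.
Local Open Scope group_scope.
Local Notation G' := [~: [set: gT], [set: gT]].
Hypothesis hG' : #|G'| = 2.

Lemma G'_norm (x : gT) : x \in 'N(G').
Proof. by apply: (subsetP (commg_norml [set: gT]%G [set: gT])); rewrite inE. Qed.

Lemma G'1 : #|G' :\ 1| = 1%N.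
Proof. by move: hG'; rewrite (cardsD1 1) group1 => -[]. Qed.

Lemma G'_two (c d : gT) : c \in G' -> d \in G' -> c != 1 -> d != 1 -> c = d.
Proof.
move=> cG dG c1 d1.
have : #|G' :\ 1| <= 1 by rewrite G'1.
move/card_le1_eqP; apply; rewrite !inE ?c1 ?d1 //.
Qed.

Lemma G'_central (c y : gT) : c \in G' -> commute c y.
Proof.
move=> cG; apply/commgP; rewrite -conjg_fix; apply/eqP.
have [->|c1] := eqVneq c 1; first by rewrite conj1g.
apply: G'_two => //; last by rewrite conjg_eq1.
by rewrite memJ_norm // G'_norm.
Qed.

Lemma comm_in (x y : gT) : [~ x, y] \in G'.
Proof. by rewrite mem_commg ?inE. Qed.

Definition eps : gT := odflt 1 [pick x in G' :\ 1].

Lemma eps_spec : eps \in G' /\ eps != 1.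
Proof.
rewrite /eps; case: pickP => [x|h]; first by rewrite !inE => /andP[-> ->].
by have := G'1; rewrite (eq_card0 h).
Qed.

Lemma G'_cases c : c \in G' -> c = 1 \/ c = eps.
Proof.
move=> cG; have [->|c1] := eqVneq c 1; [by left | right].
by case: eps_spec => e1 e2; apply: G'_two.
Qed.

Definition prodl (s : seq gT) := \prod_(x <- s) x.

Lemma prodl_cat s t : prodl (s ++ t) = prodl s * prodl t.
Proof. by rewrite /prodl big_cat. Qed.

Lemma prodl_cons x s : prodl (x :: s) = x * prodl s.
Proof. by rewrite /prodl big_cons. Qed.

Lemma commute_prodl x s : (forall y, y \in s -> commute x y) -> commute x (prodl s).
Proof. by move=> h; rewrite /prodl big_seq; apply: commute_prod. Qed.

Definition allcomm (s : seq gT) := {in s &, forall x y, commute x y}.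

Lemma LL s t : perm_eq s t ->
  exists c, [/\ c \in G', allcomm s -> c = 1 & prodl t = c * prodl s].
Proof.
elim: s t => [|x s IH] t.
  rewrite perm_sym => /perm_nilP ->; exists 1; split=> //.
  by rewrite /prodl !big_nil mulg1.
move=> pst; have xt : x \in t by rewrite -(perm_mem pst) mem_head.
case/splitPr: t / xt pst => t1 t2 pst.
have pst' : perm_eq s (t1 ++ t2).
  by rewrite -(perm_cons x); apply: (perm_trans pst); rewrite (perm_catCA t1 [:: x] t2).
have [c2 [c2G c2c e2]] := IH _ pst'.
set c1 := [~ prodl t1, x].
have c1G : c1 \in G' by apply: comm_in.
exists (c1 * c2); split; first by rewrite groupM.
  move=> ac; rewrite c2c; last by move=> a b ha hb; apply: ac; rewrite inE ?ha ?hb orbT.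
  rewrite mulg1; apply/eqP/commgP; apply: commute_sym; apply: commute_prodl => y yt1.
  apply: ac; first exact: mem_head.
  by rewrite (perm_mem pst) mem_cat yt1.
rewrite prodl_cat prodl_cons mulgA (commgC (prodl t1) x) -/c1 prodl_cons.
move: e2; rewrite prodl_cat => e2.
clearbody c1.
have -> : x * prodl t1 * c1 = c1 * (x * prodl t1) by rewrite (G'_central _ c1G).
rewrite -!mulgA; congr (c1 * _); rewrite e2 !mulgA.
by rewrite (G'_central _ c2G).
Qed.

Lemma noncomm_perm s x y : x \in s -> y \in s -> ~ commute x y ->
  exists t1 t2, [/\ perm_eq s t1, perm_eq s t2 & prodl t1 != prodl t2].
Proof.
move=> xs ys nxy.
have xy : x != y by apply/eqP=> exy; apply: nxy; rewrite exy.
have p1 := perm_to_rem xs.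
have yr : y \in rem x s.
  by move: ys; rewrite (perm_mem p1) inE eq_sym (negbTE xy).
have p2 := perm_to_rem yr.
exists [:: x, y & rem y (rem x s)], [:: y, x & rem y (rem x s)]; split.
- by apply: (perm_trans p1); rewrite perm_cons.
- apply: (perm_trans p1); rewrite -[_ :: rem x s]/([:: x] ++ rem x s).
  rewrite perm_sym (perm_catCA [:: y] [:: x] (rem y (rem x s))) /= perm_cons perm_sym //.
- rewrite !prodl_cons !mulgA; apply/eqP => /mulIg; exact: nxy.
Qed.

Definition seqof (S : fseq gT) := flatten [seq nseq (S x) x | x <- enum gT].
Definition prodS (S : fseq gT) := prodl (seqof S).
Definition supp (S : fseq gT) : {set gT} := [set x | 0 < S x].
Definition commb (S : fseq gT) := supp S \subset 'C(supp S).

Lemma count_seqof S y : count_mem y (seqof S) = S y.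
Proof.
rewrite /seqof count_flatten -map_comp sumnE big_map big_enum /=.
rewrite (bigD1 y) //= count_nseq /= eqxx mul1n big1 ?addn0 // => x xy.
by rewrite count_nseq /= (negbTE xy).
Qed.

Lemma mem_seqof S y : (y \in seqof S) = (y \in supp S).
Proof. by rewrite -has_pred1 has_count count_seqof inE. Qed.

Lemma perm_seqof S t : perm_eq (seqof S) t <-> (forall x, count_mem x t = S x).
Proof.
split=> [p x|h]; first by rewrite -(seq.permP p) count_seqof.
by apply/allP => z _ /=; rewrite h count_seqof.
Qed.

Lemma commbP S : reflect (allcomm (seqof S)) (commb S).
Proof.
apply: (iffP idP) => [h x y xs ys|h].
  rewrite mem_seqof in xs; rewrite mem_seqof in ys.
  exact: (centP (subsetP h x xs)) y ys.
apply/subsetP => x xs; apply/centP => y ys; apply: h; by rewrite mem_seqof.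
Qed.

Lemma piP S h : in_pi S h <->
  (if commb S then h = prodS S else h * (prodS S)^-1 \in G').
Proof.
have key t : perm_eq (seqof S) t -> exists c, [/\ c \in G',
    commb S -> c = 1 & prodl t = c * prodS S].
  move=> p; have [c [cG cc e]] := LL p; exists c; split=> // /commbP; exact: cc.
split.
  case=> t [ct]; rewrite -/(prodl t) => <-; have [c [cG cc ->]] := key _ (proj2 (perm_seqof S t) ct).
  case: ifP => [/cc -> |_]; first by rewrite mul1g.
  by rewrite -mulgA mulgV mulg1.
case: ifP => [cS -> | ncS hG].
  by exists (seqof S); split=> // x; rewrite count_seqof.
have [x [y [xs ys nxy]]] : exists x y, [/\ x \in seqof S, y \in seqof S & ~ commute x y].
  apply/not_all_not_ex => hh; move/negP: ncS; apply; apply/commbP => x y xs ys.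
  by apply: NNPP => nc; apply: (hh x); exists y.
have [t1 [t2 [p1 p2 n12]]] := noncomm_perm xs ys nxy.
have [c1 [c1G _ e1]] := key _ p1; have [c2 [c2G _ e2]] := key _ p2.
have e1' : prodl t1 * (prodS S)^-1 = c1 by rewrite e1 -mulgA mulgV mulg1.
have e2' : prodl t2 * (prodS S)^-1 = c2 by rewrite e2 -mulgA mulgV mulg1.
have hh : exists2 t, perm_eq (seqof S) t & prodl t = h.
  have nc : c1 != c2 by apply: contra n12 => /eqP ec; rewrite e1 e2 ec.
  case: (G'_cases hG) => eh; case: (G'_cases c1G) => e1c; case: (G'_cases c2G) => e2c;
    try (by move: nc; rewrite e1c e2c eqxx);
    [exists t1 | exists t2 | exists t2 | exists t1] => //;
    apply: (mulIg (prodS S)^-1); by rewrite ?e1' ?e2' ?eh ?e1c ?e2c.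
case: hh => t pt <-; exists t; split=> //; exact/perm_seqof.
Qed.

Lemma inBP S : inB S <-> (if commb S then prodS S = 1 else prodS S \in G').
Proof.
rewrite /inB piP mul1g groupV; case: ifP => // _.
by split=> h; rewrite h.
Qed.

Lemma supp_fcat (S T : fseq gT) : supp (fcat S T) = supp S :|: supp T.
Proof. by apply/setP => x; rewrite !inE ffunE addn_gt0. Qed.

Lemma commb_fcat (S T : fseq gT) :
  commb (fcat S T) = [&& commb S, commb T & supp T \subset 'C(supp S)].
Proof.
rewrite /commb supp_fcat centU subUset !subsetI (centsC (supp S) (supp T)).
by case: (supp S \subset _); case: (supp T \subset 'C(supp T)); case: (supp T \subset 'C(supp S)).
Qed.

Lemma prodS_fcat (S T : fseq gT) : exists c, [/\ c \in G', commb (fcat S T) -> c = 1 &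
  prodS (fcat S T) = c * (prodS S * prodS T)].
Proof.
have p : perm_eq (seqof S ++ seqof T) (seqof (fcat S T)).
  by rewrite perm_sym; apply/perm_seqof => x; rewrite count_cat !count_seqof ffunE.
have [c [cG cc e]] := LL p; exists c; split => //.
  move=> /commbP h; apply: cc => x y xs ys; apply: h; by rewrite -(perm_mem p).
by rewrite /prodS e prodl_cat.
Qed.

Lemma fcatC (S T : fseq gT) : fcat S T = fcat T S.
Proof. by apply/ffunP => x; rewrite !ffunE addnC. Qed.

Lemma fcatA (S T U : fseq gT) : fcat (fcat S T) U = fcat S (fcat T U).
Proof. by apply/ffunP => x; rewrite !ffunE addnA. Qed.

Lemma fpowS (S : fseq gT) k : fpow S k.+1 = fcat S (fpow S k).
Proof. by apply/ffunP => x; rewrite !ffunE mulSn. Qed.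

Lemma supp_fpow (S : fseq gT) k : 0 < k -> supp (fpow S k) = supp S.
Proof. by move=> k0; apply/setP => x; rewrite !inE ffunE muln_gt0 k0. Qed.

Lemma commb_fpow (S : fseq gT) k : 0 < k -> commb (fpow S k) = commb S.
Proof. by move=> k0; rewrite /commb supp_fpow. Qed.

Lemma prodS_fpow (S : fseq gT) k : 0 < k -> exists c, [/\ c \in G', commb S -> c = 1 &
  prodS (fpow S k) = c * prodS S ^+ k].
Proof.
case: k => // k _; elim: k => [|k [c [cG cc e]]].
  exists 1; split=> //; rewrite mul1g expg1; congr prodS.
  by apply/ffunP => x; rewrite !ffunE mul1n.
have [d [dG dc e2]] := prodS_fcat S (fpow S k.+1).
exists (d * c); split; first by rewrite groupM.
  by move=> cS; rewrite cc // dc ?mulg1 // -fpowS commb_fpow.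
rewrite fpowS e2 e expgS -mulgA; congr (d * _).
by rewrite mulgA -(G'_central _ cG) -mulgA -!expgS.
Qed.

Lemma inB_fcat (S T : fseq gT) : inB (fcat S T) <->
  (if commb (fcat S T) then prodS S * prodS T = 1 else prodS S * prodS T \in G').
Proof.
rewrite inBP; have [c [cG cc ->]] := prodS_fcat S T.
case: ifP => [/cc -> | _]; first by rewrite mul1g.
by rewrite groupMl.
Qed.

Lemma simB_comm (S S' : fseq gT) : commb S -> commb S' -> prodS S = prodS S' ->
  'C(supp S) = 'C(supp S') -> simB S S'.
Proof.
move=> cS cS' e eC T; rewrite !inB_fcat !commb_fcat cS cS' e eC; done.
Qed.

Lemma simB_nc (S S' : fseq gT) : ~~ commb S -> ~~ commb S' ->
  prodS S * (prodS S')^-1 \in G' -> simB S S'.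
Proof.
move=> cS cS' d T; rewrite !inB_fcat !commb_fcat (negbTE cS) (negbTE cS') /=.
have -> : prodS S * prodS T = (prodS S * (prodS S')^-1) * (prodS S' * prodS T).
  by rewrite -!mulgA (mulKg (prodS S')).
by rewrite groupMl.
Qed.

Lemma simB_refl (S : fseq gT) : simB S S.
Proof. by []. Qed.

Lemma simB_sym (S S' : fseq gT) : simB S S' -> simB S' S.
Proof. by move=> h T; split => /h. Qed.

Lemma simB_trans (S1 S2 S3 : fseq gT) : simB S1 S2 -> simB S2 S3 -> simB S1 S3.
Proof. by move=> h1 h2 T; split => [/h1/h2|/h2/h1]. Qed.

Lemma simB_catr (S S' T : fseq gT) : simB S S' -> simB (fcat S T) (fcat S' T).
Proof. by move=> h U; rewrite !fcatA; apply: h. Qed.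

Lemma simB_catl (S S' T : fseq gT) : simB S S' -> simB (fcat T S) (fcat T S').
Proof. by move=> h; rewrite !(fcatC T); apply: simB_catr. Qed.

Lemma simB_cat (S S' T T' : fseq gT) : simB S S' -> simB T T' ->
  simB (fcat S T) (fcat S' T').
Proof.
by move=> h1 h2; apply: (simB_trans (simB_catr T h1)); apply: simB_catl.
Qed.

Lemma fpow_add (S : fseq gT) a b : fcat (fpow S a) (fpow S b) = fpow S (a + b).
Proof. by apply/ffunP => x; rewrite !ffunE mulnDl. Qed.

Lemma fpow1 (S : fseq gT) : fpow S 1 = S.
Proof. by apply/ffunP => x; rewrite !ffunE mul1n. Qed.

Lemma prodS_fpow_comm (S : fseq gT) k : commb S -> 0 < k ->
  prodS (fpow S k) = prodS S ^+ k.
Proof.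
by move=> cS k0; have [c [_ cc ->]] := prodS_fpow S k0; rewrite cc // mul1g.
Qed.

Lemma fpow_sim (S : fseq gT) a b : commb S -> 0 < a -> 0 < b ->
  a = b %[mod #[prodS S]] -> simB (fpow S a) (fpow S b).
Proof.
move=> cS a0 b0 eab; apply: simB_comm; rewrite ?commb_fpow ?supp_fpow //.
by rewrite !prodS_fpow_comm // -expg_mod_order eab expg_mod_order.
Qed.

Definition single (u : gT) : fseq gT := [ffun x => nat_of_bool (x == u)].

Lemma supp_single u : supp (single u) = [set u].
Proof. by apply/setP => x; rewrite !inE ffunE; case: (x == u). Qed.

Lemma commb_single u : commb (single u).
Proof. by rewrite /commb supp_single sub1set cent_set1 cent1id. Qed.

Lemma prodS_single u : prodS (single u) = u.
Proof.
have p : perm_eq [:: u] (seqof (single u)).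
  rewrite perm_sym; apply/perm_seqof => x; rewrite ffunE /= addn0 eq_sym.
  by case: (u == x).
have [c [_ cc e]] := LL p; rewrite /prodS e cc ?mul1g; first by rewrite prodl_cons /prodl big_nil mulg1.
by move=> x y; rewrite !inE => /eqP -> /eqP ->.
Qed.

Lemma prodS_cent (S : fseq gT) : commb S -> prodS S \in 'C(supp S).
Proof.
move=> cS; rewrite /prodS /prodl big_seq; apply: group_prod => x.
by rewrite mem_seqof; apply: (subsetP cS).
Qed.

Lemma eps_cent (A : {set gT}) : eps \in 'C(A).
Proof. by apply/centP => y _; apply: G'_central; case: eps_spec. Qed.

Lemma nc_sat (T T' : fseq gT) : simB T T' -> ~~ commb T -> ~~ commb T'.
Proof.
move=> h ncT; apply/negP => cT'.
set p' := prodS T'.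
have pC : p' \in 'C(supp T') by apply: prodS_cent.
have [eG e1] := eps_spec.
have h2 := h (single p'^-1); have h1 := h (single (eps * p'^-1)).
rewrite !inB_fcat !commb_fcat !supp_single (negbTE ncT) cT' !commb_single /= in h1 h2.
have u1C : eps * p'^-1 \in 'C(supp T') by rewrite groupM ?groupV ?eps_cent.
have u2C : p'^-1 \in 'C(supp T') by rewrite groupV.
rewrite !sub1set u1C !prodS_single in h1; rewrite !sub1set u2C !prodS_single in h2.
have := proj2 h2 (mulgV _) => hG.
have : ~ (p' * (eps * p'^-1) = 1).
  by rewrite mulgA -(G'_central _ eG) -mulgA mulgV mulg1; apply/eqP.
apply; apply: (proj1 h1).
by rewrite mulgA -(G'_central _ eG) -mulgA groupMl.
Qed.

Definition Kpow (S : fseq gT) n : fseq gT -> Prop :=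
  fun T => exists2 k, (0 < k <= n)%N & simB T (fpow S k).

Lemma Kpow_sub (S : fseq gT) : commb S -> class_subgroup (Kpow S #[prodS S]).
Proof.
move=> cS; set n := #[prodS S]; have n0 : 0 < n by apply: order_gt0.
split.
- move=> T T' h [k kn hk]; exists k => //; exact: simB_trans (simB_sym h) hk.
- move=> T U [a /andP[a0 an] ha] [b /andP[b0 bn] hb].
  exists ((a + b).-1 %% n).+1; first by rewrite ltn_pmod.
  apply: (simB_trans (simB_cat ha hb)); rewrite fpow_add; apply: fpow_sim => //.
    by rewrite addn_gt0 a0.
  by rewrite -addn1 modnDml addn1 prednK // addn_gt0 a0.
exists (fpow S n); first by exists n; rewrite ?n0 ?leqnn.
split.
  move=> T [k /andP[k0 kn] hk]; apply: (simB_trans (simB_catl _ hk)).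
  apply: (simB_trans _ (simB_sym hk)); rewrite fpow_add; apply: fpow_sim => //.
    by rewrite addn_gt0 n0.
  by rewrite modnDl.
move=> T [k /andP[k0 kn] hk].
set k' := if k == n then n else n - k.
have k'0 : 0 < k' <= n.
  rewrite /k'; case: eqP => [_|kn']; first by rewrite n0 leqnn.
  by rewrite subn_gt0 leq_subr andbT ltn_neqAle kn andbT; apply/eqP.
exists (fpow S k'); first by exists k'.
apply: (simB_trans (simB_catr _ hk)); rewrite fpow_add; apply: fpow_sim => //.
  by rewrite addn_gt0 k0.
rewrite /k'; case: eqP => [->|_]; first by rewrite modnDl.
by rewrite subnKC.
Qed.

Lemma Kpow_distinct (S : fseq gT) i j : commb S -> 0 < i -> (i < j <= #[prodS S])%N ->
  ~ simB (fpow S i) (fpow S j).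
Proof.
move=> cS i0 /andP[ij jn] h.
set p := prodS S.
have u : (p ^+ i)^-1 \in 'C(supp S) by rewrite groupV groupX // prodS_cent.
have := h (single (p ^+ i)^-1).
have j0 : 0 < j by apply: leq_trans ij.
rewrite !inB_fcat !commb_fcat !commb_fpow // cS commb_single !supp_fpow // supp_single sub1set u /=.
rewrite !prodS_fpow_comm // prodS_single mulgV => -[] /(_ erefl) e _.
have e' : p ^+ j = p ^+ i by rewrite -[p ^+ j](mulgKV (p ^+ i)) e mul1g.
have : p ^+ (j - i) * p ^+ i = 1 * p ^+ i by rewrite -expgD subnK ?mul1g // ltnW.
move/mulIg/eqP; rewrite -order_dvdn => /dvdn_leq.
have : 0 < j - i by rewrite subn_gt0.
move=> ji /(_ ji); move: jn; rewrite -/p; lia.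
Qed.

Lemma gen_sub (K : fseq gT -> Prop) (S : fseq gT) : class_subgroup K -> K S ->
  forall k, 0 < k -> K (fpow S k).
Proof.
case=> _ cl _ KS; case=> // k _; elim: k => [|k IH]; first by rewrite fpow1.
by rewrite fpowS; apply: cl.
Qed.

Lemma Knc_sub (S : fseq gT) : ~~ commb S -> class_subgroup (fun T => ~~ commb T).
Proof.
move=> ncS; split.
- by move=> T T' h; apply: nc_sat.
- by move=> T U ncT _; rewrite commb_fcat (negbTE ncT).
set m := #[prodS S].
have m0 : 0 < m by apply: order_gt0.
have EG : prodS (fpow S m) \in G'.
  have [c [cG _ ->]] := prodS_fpow S m0; by rewrite expg_order mulg1.
exists (fpow S m); first by rewrite commb_fpow.
split.
  move=> T ncT; apply: simB_nc => //; first by rewrite commb_fcat (negbTE ncT) !andbF.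
  have [c [cG _ ->]] := prodS_fcat (fpow S m) T.
  by rewrite -!mulgA mulgV mulg1 groupM.
move=> T ncT; set mT := #[prodS T].
have mT0 : 0 < mT by apply: order_gt0.
have k0 : 0 < mT.*2.-1 by rewrite -double_gt0 in mT0; lia.
exists (fpow T mT.*2.-1); first by rewrite commb_fpow.
rewrite -{1}(fpow1 T) fpow_add add1n prednK ?double_gt0 //.
apply: simB_nc; rewrite ?commb_fpow ?double_gt0 //.
have [c [cG _ ->]] := prodS_fpow T (k := mT.*2) (leq_trans k0 (leq_pred _)).
by rewrite -muln2 expgM expg_order expg1n mulg1 groupM ?groupV.
Qed.

Lemma B23 (e : fseq gT) : inB (fpow e 2) -> inB (fpow e 3) -> inB e.
Proof.
rewrite !inBP !commb_fpow //.
have [c2 [c2G c2c ->]] := prodS_fpow e (k := 2) isT.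
have [c3 [c3G c3c ->]] := prodS_fpow e (k := 3) isT.
have e3 : prodS e ^+ 3 = prodS e * prodS e ^+ 2 by rewrite -expgS.
case: ifP => [cS | _].
  rewrite (c2c cS) (c3c cS) !mul1g => h2; rewrite expgS h2; by rewrite mulg1.
rewrite (groupMl _ c2G) (groupMl _ c3G) => h2; rewrite expgS (groupMr _ h2); exact: id.
Qed.

Lemma seminormal_B : seminormal (@inB gT).
Proof.
move=> x _ [a [Ba ea]] [b [Bb eb]].
have hx g : (0 <= x g)%R /\ (x g *+ 2)%R = Posz (a g) /\ (x g *+ 3)%R = Posz (b g).
  have := congr1 (fun f : {ffun gT -> int} => f g) ea; have := congr1 (fun f : {ffun gT -> int} => f g) eb.
  rewrite !ffunE => h3 h2; split; last by [].
  by move: h2; rewrite GRing.mulr2n => h2; lia.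
set e : fseq gT := [ffun g => absz (x g)].
have xe : x = embZ e.
  by apply/ffunP => g; rewrite !ffunE; have [h _] := hx g; rewrite gez0_abs.
exists e; split => //; apply: B23.
  suff -> : fpow e 2 = a by [].
  apply/ffunP => g; rewrite !ffunE; have [h [h2 _]] := hx g.
  have ax := gez0_abs h; move: h2 ax; rewrite GRing.mulr2n; move: (a g) (x g) => ag xg; lia.
suff -> : fpow e 3 = b by [].
apply/ffunP => g; rewrite !ffunE; have [h [_ h3]] := hx g.
have ax := gez0_abs h; move: h3 ax; rewrite !GRing.mulrS GRing.mulr0n; move: (b g) (x g) => bg xg; lia.
Qed.

Lemma clifford : clifford_class_semigroup gT.
Proof.
move=> S; case cS: (commb S).
  exists (Kpow S #[prodS S]); first exact: Kpow_sub.
  by exists 1%N; [rewrite order_gt0 | rewrite fpow1].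
by exists (fun T => ~~ commb T); [apply: (@Knc_sub S); rewrite cS | rewrite cS].
Qed.

Lemma pi_single (S : fseq gT) g : (forall h, in_pi S h <-> h = g) ->
  commb S /\ g = prodS S.
Proof.
move=> H; case cS: (commb S).
  by split=> //; have := proj2 (H g) erefl; rewrite piP cS.
have [eG e1] := eps_spec.
have h1 : in_pi S (prodS S) by rewrite piP cS mulgV group1.
have h2 : in_pi S (eps * prodS S) by rewrite piP cS -mulgA mulgV mulg1.
have f1 := proj1 (H _) h1; have f2 := proj1 (H _) h2.
have : eps * prodS S = 1 * prodS S by rewrite mul1g f2 f1.
by move/mulIg => e; rewrite e eqxx in e1.
Qed.

Definition inv (S : fseq gT) : bool * gT * {set gT} :=
  (commb S, prodS S, if commb S then 'C(supp S) else set0).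

Lemma inv_sim (S S' : fseq gT) : inv S = inv S' -> simB S S'.
Proof.
rewrite /inv; case=> ec ep eC; rewrite -ec in eC; case cS: (commb S) in eC *.
  by apply: simB_comm; rewrite -?ec.
by apply: simB_nc; rewrite -?ec ?cS // ep mulgV group1.
Qed.

Local Notation Z := ('Z([set: gT])).

Lemma Zcomm (z y : gT) : z \in Z -> commute z y.
Proof. by case/centerP => _ /(_ y); apply; rewrite inE. Qed.

Definition Qc := rcosets Z [set: gT] :\ Z.

Lemma cent_cover (A : {set gT}) :
  'C(A) = 'C(cover [set C in Qc | C :&: A != set0]).
Proof.
apply/setP => y; apply/centP/centP => hy w.
  case/bigcupP => C; rewrite !inE => /andP[/andP[CZ /rcosetsP[a _ ->]] /set0Pn[b]].
  rewrite inE => /andP[bC bA] wC.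
  rewrite mem_rcoset in bC; rewrite mem_rcoset in wC.
  have -> : w = (w * a^-1) * (b * a^-1)^-1 * b by rewrite invMg invgK !mulgA !mulgKV.
  apply: commuteM; last exact: hy.
  apply: commuteM; apply: commute_sym; first exact: Zcomm.
  by apply: Zcomm; rewrite groupV.
move=> wA; have [wZ|wZ] := boolP (w \in Z).
  by apply: commute_sym; apply: Zcomm.
apply: hy; apply/bigcupP; exists (Z :* w); last exact: rcoset_refl.
have wR : Z :* w \in rcosets Z [set: gT] by apply/rcosetsP; exists w; rewrite ?inE.
rewrite !inE wR andbT; apply/andP; split.
  by apply: contra wZ => /eqP e; rewrite -e rcoset_refl.
by apply/set0Pn; exists w; rewrite !inE rcoset_refl.
Qed.

Definition HH := [set 'C(cover P) | P in powerset Qc :\ set0].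
Definition U1 : {set bool * gT * {set gT}} := [set (true, z, [set: gT]) | z in Z].
Definition U2 : {set bool * gT * {set gT}} :=
  [set (true, x.1, x.2) | x in setX [set: gT] HH].
Definition U3 : {set bool * gT * {set gT}} := [set (false, x, set0) | x in [set: gT]].

Lemma cent_set0 : 'C(set0 : {set gT}) = [set: gT].
Proof. by apply/setP => y; rewrite inE; apply/centP => w; rewrite inE. Qed.

Lemma prodS_sub (S : fseq gT) (H : {group gT}) : supp S \subset H -> prodS S \in H.
Proof.
move=> sH; rewrite /prodS /prodl big_seq; apply: group_prod => x.
by rewrite mem_seqof; apply: (subsetP sH).
Qed.

Lemma inv_in (S : fseq gT) : inv S \in U1 :|: U2 :|: U3.
Proof.
rewrite /inv; case cS: (commb S); last first.
  by rewrite !inE; apply/orP; right; apply/imsetP; exists (prodS S); rewrite ?inE.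
have [hT|hT] := eqVneq 'C(supp S) [set: gT].
  rewrite !inE; apply/orP; left; apply/orP; left; apply/imsetP; exists (prodS S); rewrite ?hT //.
  apply: prodS_sub; apply/subsetP => x xs; apply/centerP; split; first by rewrite inE.
  move=> y _; apply: commute_sym; have : y \in 'C(supp S) by rewrite hT inE.
  by move/centP; apply.
rewrite !inE; apply/orP; left; apply/orP; right; apply/imsetP.
exists (prodS S, 'C(supp S)) => //; rewrite !inE /=; apply/imsetP.
set P := [set C in Qc | C :&: supp S != set0].
exists P; last exact: cent_cover.
rewrite !inE; apply/andP; split.
  apply: contra hT => /eqP P0; rewrite cent_cover -/P P0.
  by rewrite /cover big_set0 cent_set0.
by apply/subsetP => C; rewrite inE => /andP[].
Qed.

Lemma nonab : ~~ abelian [set: gT].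
Proof.
apply/negP => /commG1P e; move: hG'; by rewrite e cards1.
Qed.

Lemma index_ge4 : 4 <= #|[set: gT] : Z|.
Proof.
have k0 := indexg_gt0 [set: gT]%G Z.
rewrite leqNgt; apply/negP => k3; apply/negP: nonab; apply/negPn.
apply: (@cyclic_center_factor_abelian _ [set: gT]%G).
have nZ : [set: gT] \subset 'N(Z) by apply: normal_norm; apply: (center_normal [set: gT]%G).
have cq := card_quotient nZ.
have [k1|k1] := eqVneq #|[set: gT] : Z| 1%N.
  rewrite (card1_trivg (G := ([set: gT] / Z)%G)); first exact: cyclic1.
  by rewrite /= cq k1.
apply: prime_cyclic; rewrite /= cq.
by move: k0 k1 k3; case: #|_ : _| => [|[|[|[|]]]].
Qed.

Lemma Zge2 : 2 <= #|Z|.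
Proof.
rewrite -hG'; apply: subset_leq_card; apply/subsetP => c cG.
by apply/centerP; split; [rewrite inE | move=> y _; apply: G'_central].
Qed.

Lemma cardG : #|[set: gT]| = (#|Z| * #|[set: gT] : Z|)%N.
Proof. by rewrite Lagrange // subsetT. Qed.

Lemma card_Qc : #|Qc| = #|[set: gT] : Z|.-1.
Proof.
rewrite /Qc [#|[set: gT] : Z|](cardsD1 Z) /=.
have -> : Z \in rcosets Z [set: gT] by apply/rcosetsP; exists 1; rewrite ?inE ?mulg1.
by [].
Qed.

Lemma card_U : (#|U1 :|: U2 :|: U3| <= #|Z| + #|[set: gT]| * 2 ^ #|Qc|)%N.
Proof.
have c1 : #|U1| <= #|Z| by apply: leq_imset_card.
have c3 : #|U3| <= #|[set: gT]| by apply: leq_imset_card.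
have cH : (#|HH| <= 2 ^ #|Qc| - 1)%N.
  apply: leq_trans (leq_imset_card _ _) _.
  by rewrite card_pow0 subn1.
have c2 : (#|U2| <= #|[set: gT]| * (2 ^ #|Qc| - 1))%N.
  by apply: leq_trans (leq_imset_card _ _) _; rewrite cardsX leq_mul2l cH orbT.
have p0 : (0 < 2 ^ #|Qc|)%N by rewrite expn_gt0.
rewrite !cardsU.
apply: leq_trans (leq_subr _ _) _; apply: leq_trans (leq_add (leq_subr _ _) (leqnn _)) _.
move: c1 c2 c3 p0; move: (2 ^ #|Qc|)%N => m; nia.
Qed.

Lemma prod_bound : (2 ^ (#|[set: gT]| - #|Z|) <= \prod_(g in [set: gT] :\: Z) #[g])%N.
Proof.
have -> : (#|[set: gT]| - #|Z| = #|[set: gT] :\: Z|)%N by rewrite cardsD setTI.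
rewrite -prod_nat_const; apply: leq_prod => g; rewrite !inE andbT => gZ.
rewrite order_gt1; apply: contra gZ => /eqP ->; exact: group1.
Qed.

Lemma final_bound : (#|Z| + #|[set: gT]| * 2 ^ #|Qc| <=
   #|Z| + \prod_(g in [set: gT] :\: Z) #[g])%N.
Proof.
rewrite leq_add2l; apply: leq_trans prod_bound.
rewrite card_Qc cardG.
have hk := index_ge4; have hz := Zge2.
move: hk hz; move: #|[set: gT] : Z| #|Z| => k z hk hz.
case: k hk => // a ha; case: z hz => // b hb.
have h := @ar1 a b ltac:(lia) ltac:(lia).
have -> : (b.+1 * a.+1 - b.+1 = a * b + a)%N.
  by rewrite mulnS addKn mulSn addnC mulnC.
rewrite expnD /=; apply: leq_mul => //.
by move: h; rewrite !addn1 mulnC.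
Qed.

End Main.

Definition pb (P : Prop) : bool := if excluded_middle_informative P then true else false.
Lemma pbP (P : Prop) : pb P = true <-> P.
Proof. by rewrite /pb; case: excluded_middle_informative. Qed.

Theorem theorem3p10 (gT : finGroupType)
  (hG' : #|([~: [set: gT], [set: gT]])%g| = 2) :
  (* (1) *)
  seminormal (@inB gT) /\
  (* (2) *)
  clifford_class_semigroup gT /\
  (forall (S : fseq gT) (g : gT),
     (forall h, in_pi S h <-> h = g) ->
     let n := #[g]%g in
     (* {[S],[S^[2]],...,[S^[n]]} is a subgroup ... *)
     class_subgroup (fun T => exists2 k, (0 < k <= n)%N & simB T (fpow S k)) /\
     (* ... of order n (the n classes are pairwise distinct) ... *)
     (forall i j, (0 < i)%N -> (i < j <= n)%N -> ~ simB (fpow S i) (fpow S j)) /\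
     (* ... generated by [S]: it lies in every subgroup containing [S] *)
     (forall K, class_subgroup K -> K S ->
        forall k, (0 < k <= n)%N -> K (fpow S k))) /\
  (* (3) : C(B(G),F(G)) has a set of class representatives of size
     at most |Z(G)| + prod_{g in G \ Z(G)} ord(g) *)
  (exists reps : seq (fseq gT),
     (size reps <= #|('Z([set: gT]))%g| +
        \prod_(g in ([set: gT] :\: 'Z([set: gT]))%g) #[g]%g)%N /\
     forall S : fseq gT, exists2 R, R \in reps & simB S R).
Proof.
split; first exact: seminormal_B hG'.
split; first exact: clifford hG'.
split.
  move=> S g H; have [cS eg] := pi_single hG' H; rewrite eg /=.
  split; first exact: Kpow_sub.
  split; first by move=> i j i0 ij; apply: Kpow_distinct.
  by move=> K KK KS k /andP[k0 _]; apply: gen_sub.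
set R := [set i : bool * gT * {set gT} | pb (exists S, inv S = i)].
pose rep (i : bool * gT * {set gT}) := epsilon (inhabits (single (1 : gT))) (fun S => inv S = i).
exists [seq rep i | i <- enum R]; split.
  rewrite size_map -cardE; apply: leq_trans (final_bound hG').
  apply: leq_trans (card_U hG'); apply: subset_leq_card; apply/subsetP => i.
  by rewrite inE => /pbP [S <-]; apply: inv_in.
move=> S; exists (rep (inv S)).
  by apply: map_f; rewrite mem_enum inE; apply/pbP; exists S.
apply: (inv_sim hG'); symmetry; rewrite /rep.
exact: (epsilon_spec _ (fun T => inv T = inv S) (ex_intro _ S erefl)).
Qed.
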